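(* In Setting S, there is a polynomial $P\in\mathbb C[p,q]$ such that \[ h_{\Gamma E}(p,q)=\dim_{\mathbb C}H^0(X,\widetilde E(p,q))=P(p,q) \] for all integers $p\ge i^0_\ell+\dots+i^s_\ell-a_1j^1_1-\dots-a_rj^r_1-1$ and $q\ge j^0_\ell+\dots+j^r_\ell-1$.
   Context: Setting S. Fix integers $s,r\ge1$ and $0\le a_1\le\dots\le a_r$. $X=\mathbb P(\mathcal O_{\mathbb P^s}\oplus\mathcal O_{\mathbb P^s}(a_1)\oplus\dots\oplus\mathcal O_{\mathbb P^s}(a_r))$ is the smooth complete toric variety of dimension $s+r$ with $N=\mathbb Z^{s+r}$ (basis $e_1,\dots,e_s,f_1,\dots,f_r$), character lattice $M=\mathbb Z^{s+r}$, and rays $\rho_0=\mathrm{cone}(-e_1-\dots-e_s+a_1f_1+\dots+a_rf_r)$, $\rho_i=\mathrm{cone}(e_i)$ $(1\le i\le s)$, $\eta_0=\mathrm{cone}(-f_1-\dots-f_r)$, $\eta_j=\mathrm{cone}(f_j)$ $(1\le j\le r)$; the maximal cones are spanned by all rays but one $\rho_i$ and one $\eta_j$. For $m=(d_1,\dots,d_{s+r})\in M$: $\langle m,n(\rho_0)\rangle=-d_1-\dots-d_s+a_1d_{s+1}+\dots+a_rd_{s+r}$, $\langle m,n(\rho_i)\rangle=d_i$, $\langle m,n(\eta_0)\rangle=-(d_{s+1}+\dots+d_{s+r})$, $\langle m,n(\eta_j)\rangle=d_{s+j}$. The Cox ring is $R=\mathbb C[x_0,\dots,x_s,y_0,\dots,y_r]$,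 $\mathbb Z^{s+r+2}$-graded (finest grading) and $\mathrm{Cl}(X)\cong\mathbb Z^2$-graded by $\deg x_i=(1,0)$, $\deg y_0=(0,1)$, $\deg y_j=(-a_j,1)$; $(p,q)$ corresponds to $p[D_{\rho_0}]+q[D_{\eta_0}]$. $E$ is a finitely generated $\mathbb Z^{s+r+2}$-graded reflexive $R$-module of rank $\ell$, $\widetilde E$ its (equivariant) sheaf on $X$, $\widetilde E(p,q)$ the sheaf of the shift $E(p,q)$ ($E(p,q)_\alpha=E_{\alpha+(p,q)}$), $\Gamma E=\bigoplus_{(p,q)}H^0(X,\widetilde E(p,q))$, $\mathrm{supp}(\Gamma E)=\{(p,q):H^0(X,\widetilde E(p,q))\neq0\}$, $h_{\Gamma E}(p,q)=\dim H^0(X,\widetilde E(p,q))$. Klyachko filtrations: for a ray $\tau$ let $x^{\hat\tau}$ be the product of the variables of all rays other than $\tau$; the pieces of $E_{x^{\hat\tau}}$ of degree $\phi(m)=(\langle m,n(\tau')\rangle)_{\tau'}$ embed compatibly into a fixed $\mathbf E\cong\mathbb C^\ell$, and the image depends only on $i=\langle m,n(\tau)\rangle$; it is denoted $E^\tau(i)$, an increasing filtration of $\mathbb C^\ell$. For $\tau=\rho_t$ ($0\le t\le s$) write integers $i^t_1\le\dots\le i^t_\ell$ and subspaces $0\ne F^t_1\subseteq\dots\subseteq F^t_\ell=\mathbb C^\ell$ with $E^{\rho_t}(i)=0$ for $i<i^t_1$, $=F^t_n$ for $i^t_n\le i<i^t_{n+1}$, $=\mathbb C^\ell$ for $i\ge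 i^t_\ell$, and $i^t_n=i^t_{n+1}$ iff $F^t_n=F^t_{n+1}$; similarly for $\tau=\eta_u$ ($0\le u\le r$) with integers $j^u_n$ and subspaces $G^u_n$. Set $i^t_{\ell+1}=j^u_{\ell+1}=+\infty$. Known fact (Klyachko): $H^0(X,\widetilde E(p,q))=\bigoplus_{m\in M}H^0(X,\widetilde E(p,q))_m$ (torus weights) with $H^0(X,\widetilde E(p,q))_m\cong E^{\rho_0}(\langle m,n(\rho_0)\rangle+p)\cap\bigcap_{i=1}^sE^{\rho_i}(\langle m,n(\rho_i)\rangle)\cap E^{\eta_0}(\langle m,n(\eta_0)\rangle+q)\cap\bigcap_{j=1}^rE^{\eta_j}(\langle m,n(\eta_j)\rangle)$. *)

(* Defs.v *)
From mathcomp Require Import all_boot all_order all_algebra all_field.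
From mathcomp Require Import boolp classical_sets fsbigop.
Set Implicit Arguments. Unset Strict Implicit. Unset Printing Implicit Defensive.
Import Order.TTheory GRing.Theory Num.Theory.
Local Open Scope ring_scope.

(* The complex numbers are modelled by algC (algebraically closed, char 0). *)
Notation CC := algC.

(* Subspaces of C^l are row spaces of l x l matrices (mxalgebra, %MS).     *)
(* A Klyachko filtration of one ray is given, as in the paper, by integers *)
(* i_1 <= ... <= i_l (the function ii, indices 1..l) and subspaces          *)
(* 0 <> F_1 <= ... <= F_l = C^l (the function FF, indices 1..l), with        *)
(* i_n = i_(n+1) iff F_n = F_(n+1).                                          *)
Definition filt_data (l : nat) (ii : nat -> int) (FF : nat -> 'M[CC]_l) : Prop :=
  [/\ (forall n, (1 <= n < l)%N -> ii n <= ii n.+1),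
      (forall n, (1 <= n < l)%N -> (FF n <= FF n.+1)%MS),
      FF 1%N != 0,
      (FF l == 1%:M)%MS &
      (forall n, (1 <= n < l)%N -> (ii n == ii n.+1) = (FF n == FF n.+1)%MS)].

(* E^tau(i): 0 for i < i_1, F_n for i_n <= i < i_(n+1), C^l for i >= i_l.   *)
(* Since the F_n are nested, this is the sum of the F_n with i_n <= i.       *)
Definition filt (l : nat) (ii : nat -> int) (FF : nat -> 'M[CC]_l) (i : int)
  : 'M[CC]_l :=
  (\sum_(1 <= n < l.+1 | (ii n <= i)%R) FF n)%MS.

(* Characters m = (d_1..d_s, d_(s+1)..d_(s+r)) in M = Z^(s+r). *)
Definition charM (s r : nat) := ({ffun 'I_s -> int} * {ffun 'I_r -> int})%type.

Definition pair_rho0 (s r : nat) (a : 'I_r -> nat) (m : charM s r) : int :=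
  - (\sum_(i < s) m.1 i) + \sum_(j < r) (a j)%:Z * m.2 j.
Definition pair_eta0 (s r : nat) (m : charM s r) : int :=
  - (\sum_(j < r) m.2 j).

(* Data of the filtrations: rays rho_t (t : 'I_s.+1, t = 0 is rho_0,       *)
(* t = lift ord0 i is rho_(i+1)) and eta_u (u : 'I_r.+1 similarly).          *)
(* Klyachko: weight-m part of H^0(X, E~(p,q)).                               *)
Definition H0_weight (s r l : nat) (a : 'I_r -> nat)
  (iR : 'I_s.+1 -> nat -> int) (FR : 'I_s.+1 -> nat -> 'M[CC]_l)
  (jE : 'I_r.+1 -> nat -> int) (GE : 'I_r.+1 -> nat -> 'M[CC]_l)
  (p q : int) (m : charM s r) : 'M[CC]_l :=
  (filt (iR ord0) (FR ord0) (pair_rho0 a m + p)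
   :&: (\bigcap_(i < s) filt (iR (lift ord0 i)) (FR (lift ord0 i)) (m.1 i))
   :&: filt (jE ord0) (GE ord0) (pair_eta0 m + q)
   :&: (\bigcap_(j < r) filt (jE (lift ord0 j)) (GE (lift ord0 j)) (m.2 j)))%MS.

(* h_{Gamma E}(p,q) = dim H^0(X, E~(p,q)) = sum over all m in M of the     *)
(* dimensions of the weight spaces (finitely supported sum).                  *)
Definition hGamma (s r l : nat) (a : 'I_r -> nat)
  (iR : 'I_s.+1 -> nat -> int) (FR : 'I_s.+1 -> nat -> 'M[CC]_l)
  (jE : 'I_r.+1 -> nat -> int) (GE : 'I_r.+1 -> nat -> 'M[CC]_l)
  (p q : int) : nat :=
  (\big[addn/0%N]_(m \in [set: charM s r])
     \rank (H0_weight a iR FR jE GE p q m))%N.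

(* Evaluation of a bivariate polynomial P in C[p,q], represented as        *)
(* P : {poly {poly C}} (outer variable q, inner variable p).                *)
Definition eval2 (P : {poly {poly CC}}) (x y : CC) : CC := (P.[y%:P]).[x].

(* Main.v *)
Require Import Defs.
From mathcomp Require Import all_boot all_order all_algebra all_field.
From mathcomp Require Import boolp classical_sets fsbigop.
From mathcomp Require Import ring zify.
Import Order.TTheory GRing.Theory Num.Theory.
Local Open Scope ring_scope.
Set Implicit Arguments. Unset Strict Implicit. Unset Printing Implicit Defensive.
From mathcomp Require Import ring.

Lemma eval2E (P : {poly {poly CC}}) x y :
  eval2 P x y = \sum_(i < size P) \sum_(j < size P`_i) P`_i`_j * x ^+ j * y ^+ i.
Proof.
rewrite /eval2 (horner_coef P) horner_sum; apply: eq_bigr => i _.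
rewrite -rmorphXn /= hornerM_comm; last exact: mulrC.
rewrite hornerC (horner_coef (P`_i)) mulr_suml; apply: eq_bigr => j _.
by [].
Qed.

Lemma eval2D P Q x y : eval2 (P + Q) x y = eval2 P x y + eval2 Q x y.
Proof. by rewrite /eval2 !hornerD. Qed.
Lemma eval2M P Q x y : eval2 (P * Q) x y = eval2 P x y * eval2 Q x y.
Proof. by rewrite /eval2 !hornerM. Qed.
Lemma eval2C (c : CC) x y : eval2 c%:P%:P x y = c.
Proof. by rewrite /eval2 !hornerC. Qed.
Lemma eval2X x y : eval2 ('X%:P) x y = x.
Proof. by rewrite /eval2 hornerC hornerX. Qed.
Lemma eval2Y x y : eval2 'X x y = y.
Proof. by rewrite /eval2 hornerX hornerC. Qed.

Definition poly2_on (R : int -> int -> Prop) (F : int -> int -> CC) :=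
  exists P : {poly {poly CC}}, forall x y, R x y -> F x y = eval2 P x%:~R y%:~R.

Section P2.
Variable R : int -> int -> Prop.

Lemma poly2_ext F G : (forall x y, R x y -> F x y = G x y) -> poly2_on R G -> poly2_on R F.
Proof. by move=> FG [P HP]; exists P => x y Rxy; rewrite FG // HP. Qed.

Lemma poly2_const c : poly2_on R (fun _ _ => c).
Proof. by exists c%:P%:P => x y _; rewrite eval2C. Qed.
Lemma poly2_x : poly2_on R (fun x _ => x%:~R).
Proof. by exists 'X%:P => x y _; rewrite eval2X. Qed.
Lemma poly2_y : poly2_on R (fun _ y => y%:~R).
Proof. by exists 'X => x y _; rewrite eval2Y. Qed.
Lemma poly2_add F G : poly2_on R F -> poly2_on R G -> poly2_on R (fun x y => F x y + G x y).
Proof. by move=> [P HP] [Q HQ]; exists (P + Q) => x y Rxy; rewrite eval2D HP ?HQ. Qed.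
Lemma poly2_mul F G : poly2_on R F -> poly2_on R G -> poly2_on R (fun x y => F x y * G x y).
Proof. by move=> [P HP] [Q HQ]; exists (P * Q) => x y Rxy; rewrite eval2M HP ?HQ. Qed.
Lemma poly2_exp F n : poly2_on R F -> poly2_on R (fun x y => F x y ^+ n).
Proof.
move=> HF; elim: n => [|n IH]; first by apply: (poly2_ext _ (poly2_const 1)) => x y _.
by apply: (poly2_ext _ (poly2_mul HF IH)) => x y _; rewrite exprS.
Qed.
Lemma poly2_sum (I : Type) (s : seq I) (F : I -> int -> int -> CC) :
  (forall i, poly2_on R (F i)) -> poly2_on R (fun x y => \sum_(i <- s) F i x y).
Proof.
move=> HF; elim: s => [|i s IH].
  by apply: (poly2_ext _ (poly2_const 0)) => x y _; rewrite big_nil.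
by apply: (poly2_ext _ (poly2_add (HF i) IH)) => x y _; rewrite big_cons.
Qed.
Lemma poly2_sumI (I : finType) (F : I -> int -> int -> CC) :
  (forall i, poly2_on R (F i)) -> poly2_on R (fun x y => \sum_(i : I) F i x y).
Proof.
move=> HF; apply: (poly2_ext _ (poly2_sum (index_enum I) HF)) => x y _.
by [].
Qed.

Lemma poly2_comp (P : {poly {poly CC}}) u v : poly2_on R u -> poly2_on R v ->
  poly2_on R (fun x y => eval2 P (u x y) (v x y)).
Proof.
move=> Hu Hv; apply: (poly2_ext _ (poly2_sum _ (fun i : 'I_(size P) => _))).
  by move=> x y _; rewrite eval2E.
move=> i /=; apply: poly2_sum => j.
apply: poly2_mul; last exact: poly2_exp.
apply: poly2_mul; [exact: poly2_const | exact: poly2_exp].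
Qed.

Lemma poly2_sub F G : poly2_on R F -> poly2_on R G -> poly2_on R (fun x y => F x y - G x y).
Proof.
move=> HF HG; apply: (poly2_ext _ (poly2_add HF (poly2_mul (poly2_const (-1)) HG))).
by move=> x y _; rewrite mulN1r.
Qed.
End P2.

Lemma poly2_mono (R R' : int -> int -> Prop) F :
  (forall x y, R' x y -> R x y) -> poly2_on R F -> poly2_on R' F.
Proof. by move=> RR [P HP]; exists P => x y /RR; apply: HP. Qed.

Lemma faul_aux e : exists T : nat -> {poly CC},
  forall i, (i <= e)%N -> forall x : CC, (T i).[x + 1] - (T i).[x] = x ^+ i.
Proof.
elim: e => [|e [T HT]].
  exists (fun _ => 'X) => i; rewrite leqn0 => /eqP -> x.
  by rewrite !hornerX addrAC subrr add0r expr0.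
pose c : CC := (e.+2)%:R^-1.
pose Tn := c *: ('X^(e.+2) - \sum_(i < e.+1) 'C(e.+2, i)%:R *: T i).
exists (fun i => if i == e.+1 then Tn else T i) => k lek x.
case: eqP => [->|/eqP ne]; last by apply: HT; rewrite -ltnS ltn_neqAle ne.
rewrite /Tn !hornerZ !(hornerD, hornerN, horner_sum, hornerXn).
have -> : \sum_(i < e.+1) ('C(e.+2, i)%:R *: T i).[x + 1] =
  \sum_(i < e.+1) ('C(e.+2, i)%:R *: T i).[x] + \sum_(i < e.+1) 'C(e.+2, i)%:R * x ^+ i.
  rewrite -big_split /=; apply: eq_bigr => i _.
  by rewrite !hornerZ -(HT i (ltn_ord i)) mulrBr addrC subrK.
have E : (x + 1) ^+ e.+2 = \sum_(i < e.+1) 'C(e.+2, i)%:R * x ^+ i + x ^+ e.+1 *+ e.+2 + x ^+ e.+2.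
  rewrite exprD1n big_ord_recr big_ord_recr /= binn binSn mulr1n.
  by congr (_ + _ + _); apply: eq_bigr => i _; rewrite mulr_natl.
rewrite E.
rewrite -mulrBr.
set U := \sum_(i < e.+1) 'C(e.+2, i)%:R * x ^+ i.
set W := \sum_(i < e.+1) ('C(e.+2, i)%:R *: T i).[x].
set u := x ^+ e.+1 *+ e.+2; set v := x ^+ e.+2.
have -> : U + u + v - (W + U) - (v - W) = u.
  by ring.
by rewrite /u -mulr_natr mulrCA /c mulVf ?mulr1 // pnatr_eq0.
Qed.

Lemma faulhaber e : exists F : {poly CC}, forall n : nat,
  F.[n%:R] = \sum_(t < n) (t%:R : CC) ^+ e.
Proof.
have [T HT] := faul_aux e.
exists (T e - (T e).[0]%:P) => n.
rewrite hornerD hornerN hornerC.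
have tel := telescope_sumr (fun k => (T e).[k%:R]) (leq0n n).
rewrite (_ : (T e).[0] = (T e).[0%:R]) // -tel big_mkord; apply: eq_bigr => t _.
by rewrite mulrSr HT.
Qed.

Definition poly3 (H : nat -> int -> int -> CC) :=
  exists s : seq ({poly {poly CC}} * nat), forall t x y,
    H t x y = \sum_(pr <- s) eval2 pr.1 x%:~R y%:~R * (t%:R) ^+ pr.2.

Lemma poly3_ext F G : (forall t x y, F t x y = G t x y) -> poly3 G -> poly3 F.
Proof. by move=> FG [s Hs]; exists s => t x y; rewrite FG Hs. Qed.

Lemma poly3_c2 P : poly3 (fun _ x y => eval2 P x%:~R y%:~R).
Proof. by exists [:: (P, 0%N)] => t x y; rewrite big_seq1 expr0 mulr1. Qed.
Lemma poly3_const c : poly3 (fun _ _ _ => c).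
Proof. by apply: (poly3_ext _ (poly3_c2 c%:P%:P)) => t x y; rewrite eval2C. Qed.
Lemma poly3_x : poly3 (fun _ x _ => x%:~R).
Proof. by apply: (poly3_ext _ (poly3_c2 'X%:P)) => t x y; rewrite eval2X. Qed.
Lemma poly3_y : poly3 (fun _ _ y => y%:~R).
Proof. by apply: (poly3_ext _ (poly3_c2 'X)) => t x y; rewrite eval2Y. Qed.
Lemma poly3_t : poly3 (fun t _ _ => t%:R).
Proof. by exists [:: (1, 1%N)] => t x y; rewrite big_seq1 expr1 /eval2 !hornerC mul1r. Qed.
Lemma poly3_add F G : poly3 F -> poly3 G -> poly3 (fun t x y => F t x y + G t x y).
Proof. by move=> [s Hs] [s' Hs']; exists (s ++ s') => t x y; rewrite big_cat Hs Hs'. Qed.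
Lemma poly3_mul F G : poly3 F -> poly3 G -> poly3 (fun t x y => F t x y * G t x y).
Proof.
move=> [s Hs] [s' Hs']; exists [seq (pr.1 * pr'.1, (pr.2 + pr'.2)%N) | pr <- s, pr' <- s'].
move=> t x y; rewrite Hs Hs' big_allpairs_dep mulr_suml; apply: eq_bigr => pr _.
rewrite mulr_sumr; apply: eq_bigr => pr' _ /=.
by rewrite eval2M exprD mulrACA.
Qed.
Lemma poly3_exp F n : poly3 F -> poly3 (fun t x y => F t x y ^+ n).
Proof.
move=> HF; elim: n => [|n IH]; first by apply: (poly3_ext _ (poly3_const 1)).
by apply: (poly3_ext _ (poly3_mul HF IH)) => t x y; rewrite exprS.
Qed.
Lemma poly3_sum (I : Type) (s : seq I) (F : I -> nat -> int -> int -> CC) :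
  (forall i, poly3 (F i)) -> poly3 (fun t x y => \sum_(i <- s) F i t x y).
Proof.
move=> HF; elim: s => [|i s IH].
  by apply: (poly3_ext _ (poly3_const 0)) => t x y; rewrite big_nil.
by apply: (poly3_ext _ (poly3_add (HF i) IH)) => t x y; rewrite big_cons.
Qed.

Lemma poly3_comp (P : {poly {poly CC}}) u v : poly3 u -> poly3 v ->
  poly3 (fun t x y => eval2 P (u t x y) (v t x y)).
Proof.
move=> Hu Hv; apply: (poly3_ext _ (poly3_sum _ (fun i : 'I_(size P) => _))).
  by move=> t x y; rewrite eval2E.
move=> i /=; apply: poly3_sum => j.
apply: poly3_mul; last exact: poly3_exp.
apply: poly3_mul; [exact: poly3_const | exact: poly3_exp].
Qed.

From mathcomp Require Import zify.
Definition tnat (z : int) : nat := if z is Posz n then n else 0%N.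

Lemma tnatE (z : int) : 0 <= z -> (tnat z)%:R = z%:~R :> CC.
Proof. by case: z. Qed.
Lemma tnatZ (z : int) : 0 <= z -> (tnat z)%:Z = z.
Proof. by case: z. Qed.
Lemma tnat0 (z : int) : z <= 0 -> tnat z = 0%N.
Proof. by case: z => [[|n]|n]. Qed.
Lemma tnat_lt (B : int) t : (t < tnat (B + 1))%N = (t%:Z <= B).
Proof.
case: (leP 0 (B + 1)) => H.
  by rewrite -ltz_nat tnatZ //; lia.
by rewrite tnat0; lia.
Qed.

Lemma poly2_sum3 R (L : int -> int -> int) (PL : {poly {poly CC}}) H Hp :
  poly3 Hp -> (forall x y, (L x y)%:~R = eval2 PL x%:~R y%:~R) ->
  (forall x y, R x y -> 0 <= L x y + 1) ->
  (forall x y t, R x y -> (t < tnat (L x y + 1))%N -> H t x y = Hp t x y) ->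
  poly2_on R (fun x y => \sum_(t < tnat (L x y + 1)) H t x y).
Proof.
move=> [s Hs] HL HR HH.
have HF : forall pr : {poly {poly CC}} * nat, poly2_on R
    (fun x y => eval2 pr.1 x%:~R y%:~R * \sum_(t < tnat (L x y + 1)) (t%:R : CC) ^+ pr.2).
  move=> pr; have [F HF] := faulhaber pr.2.
  apply: poly2_mul; first by exists pr.1.
  apply: (poly2_ext (G := fun x y => eval2 F%:P (eval2 PL x%:~R y%:~R + 1) 0)).
    by move=> x y Rxy; rewrite -HF tnatE ?HR // intrD HL /eval2 hornerC.
  apply: poly2_comp; last exact: poly2_const.
  by apply: poly2_add; [exists PL | exact: poly2_const].
apply: (poly2_ext _ (poly2_sum s HF)) => x y Rxy.
rewrite (eq_bigr (fun t : 'I_ _ => Hp t x y)); last by move=> t _; apply: HH.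
rewrite (eq_bigr (fun t : 'I_ _ => \sum_(pr <- s) eval2 pr.1 x%:~R y%:~R * (t%:R) ^+ pr.2));
  last by move=> t _; rewrite Hs.
rewrite exchange_big /=; apply: eq_bigr => pr _.
by rewrite mulr_sumr.
Qed.


Fixpoint Iter (n : nat) (w : nat -> int) (Phi : int -> int -> CC) (A B : int) {struct n} : CC :=
  match n with
  | 0%N => ((0 <= B)%R)%:R * Phi A B
  | n'.+1 => \sum_(t < tnat (B + 1))
              Iter n' (fun i => w i.+1) Phi (A + w 0%N * t%:Z) (B - t%:Z)
  end.

Definition Rn (n : nat) (A B : int) : Prop :=
  -1 <= A /\ (if n is 0%N then 0 <= B else -1 <= B).


Lemma Iter_poly Phi : poly2_on (Rn 0) Phi ->
  forall n w, (forall i, 0 <= w i) -> poly2_on (Rn n) (Iter n w Phi).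
Proof.
move=> HPhi; elim=> [|n IH] w w0.
  apply: (poly2_ext _ HPhi) => A B [_ HB] /=.
  by rewrite HB mul1r.
have [P HP] := IH (fun i => w i.+1) (fun i => w0 i.+1).
rewrite (_ : Iter n.+1 w Phi = fun A B => \sum_(t < tnat (B + 1))
   Iter n (fun i => w i.+1) Phi (A + w 0%N * t%:Z) (B - t%:Z)) //.
apply: (@poly2_sum3 _ (fun A B => B) 'X
  (fun t A B => Iter n (fun i => w i.+1) Phi (A + w 0%N * t%:Z) (B - t%:Z))
  (fun t x y => eval2 P (x%:~R + (w 0%N)%:~R * t%:R) (y%:~R - t%:R))).
- apply: poly3_comp.
    apply: poly3_add; first exact: poly3_x.
    apply: poly3_mul; [exact: poly3_const | exact: poly3_t].
  apply: poly3_add; first exact: poly3_y.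
  apply: (poly3_ext _ (poly3_mul (poly3_const (-1)) poly3_t)) => t x y.
  by rewrite mulN1r.
- by move=> x y; rewrite eval2Y.
- by move=> x y [_ HB]; lia.
- move=> A B t [HA HB] Ht.
  have tB : t%:Z <= B by rewrite -tnat_lt.
  rewrite HP; last first.
    split; first by have := w0 0%N; nia.
    by case: (n) => /=; lia.
  by rewrite intrD intrM intrB.
Qed.

Lemma Iter_neg n w Phi A B : B < 0 -> Iter n w Phi A B = 0.
Proof.
case: n => [|n] /= HB.
  by rewrite leNgt HB mul0r.
by rewrite tnat0 ?big_ord0 //; lia.
Qed.

Definition fcons (T : Type) (n : nat) (x : T) (g : {ffun 'I_n -> T}) : {ffun 'I_n.+1 -> T} :=
  [ffun i => if unlift ord0 i is Some j then g j else x].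

Lemma fcons0 (T : Type) (n : nat) (x : T) (g : {ffun 'I_n -> T}) : fcons x g ord0 = x :> T.
Proof. by rewrite ffunE unlift_none. Qed.
Lemma fconsS (T : Type) (n : nat) (x : T) (g : {ffun 'I_n -> T}) j : fcons x g (lift ord0 j) = g j.
Proof. by rewrite ffunE liftK. Qed.

Lemma sum_ffunS (T : finType) n (F : {ffun 'I_n.+1 -> T} -> CC) :
  \sum_(h : {ffun 'I_n.+1 -> T}) F h =
  \sum_(x : T) \sum_(g : {ffun 'I_n -> T}) F (fcons x g).
Proof.
rewrite pair_bigA /=.
pose f (p : T * {ffun 'I_n -> T}) := fcons p.1 p.2.
pose g (h : {ffun 'I_n.+1 -> T}) := (h ord0, [ffun j => h (lift ord0 j)]).
rewrite (reindex f) /=; last first.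
  apply: onW_bij; exists g.
    by case=> x h; rewrite /f /g /= fcons0; congr (_, _); apply/ffunP => j; rewrite ffunE fconsS.
  move=> h; apply/ffunP => i; rewrite /f /g /= ffunE.
  by case: unliftP => [j ->|->]; rewrite ?ffunE.
by apply: eq_bigr.
Qed.

Lemma shift_sum K d0 (B : int) (G : nat -> CC) : d0%:Z + B < K%:Z ->
  (forall t, B < t%:Z -> G t = 0) ->
  \sum_(x < K) ((d0 <= x)%N)%:R * G (x - d0)%N = \sum_(t < tnat (B + 1)) G t.
Proof.
move=> HK HG.
have [Bneg|Bpos] := ltP B 0.
  rewrite tnat0; last by lia.
  rewrite big_ord0 big1 // => x _.
  case: leqP => dx; last by rewrite mul0r.
  by rewrite HG ?mulr0 //; lia.
have -> : \sum_(x < K) ((d0 <= x)%N)%:R * G (x - d0)%N = \sum_(d0 <= x < K) G (x - d0)%N.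
  rewrite -(big_mkord xpredT (fun x => ((d0 <= x)%N)%:R * G (x - d0)%N)) (big_cat_nat (n := d0)) /= ?leq0n //; last by lia.
  rewrite big1_seq ?add0r; last first.
    by move=> i /andP[_]; rewrite mem_index_iota => /andP[_ lt]; rewrite leqNgt lt mul0r.
  apply: eq_big_seq => i; rewrite mem_index_iota => /andP[-> _].
  by rewrite mul1r.
rewrite -{1}(add0n d0) big_addn.
rewrite (big_cat_nat (n := tnat (B + 1))) /= ?leq0n //; last by rewrite -lez_nat tnatZ; lia.
rewrite [X in _ + X]big1_seq ?addr0; last first.
  move=> i /andP[_]; rewrite mem_index_iota => /andP[Hi _]; apply: HG.
  by move: Hi; rewrite -lez_nat tnatZ; lia.
rewrite big_mkord; apply: eq_bigr => i _.
by rewrite addnK.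
Qed.

Definition bc_term n K (d : nat -> nat) (w : nat -> int) (Phi : int -> int -> CC) (A B : int)
  (h : {ffun 'I_n -> 'I_K}) : CC :=
  (\prod_(j < n) ((d j <= h j)%N)%:R) *
  ((\sum_(j < n) ((h j)%:Z - (d j)%:Z) <= B)%R)%:R *
  Phi (A + \sum_(j < n) w j * ((h j)%:Z - (d j)%:Z)) (B - \sum_(j < n) ((h j)%:Z - (d j)%:Z)).

Lemma box_count n K (d : nat -> nat) (w : nat -> int) Phi A B :
  (forall i, (i < n)%N -> (d i)%:Z + B < K%:Z) ->
  \sum_(h : {ffun 'I_n -> 'I_K}) bc_term d w Phi A B h = Iter n w Phi A B.
Proof.
elim: n d w A B => [|n IH] d w A B HK.
  rewrite /bc_term /=; under eq_bigr do rewrite !big_ord0 subr0 addr0 mul1r.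
  by rewrite sumr_const card_ffun !card_ord expn0 mulr1n.
rewrite sum_ffunS /=.
pose G t := Iter n (fun i => w i.+1) Phi (A + w 0%N * t%:Z) (B - t%:Z).
rewrite -(@shift_sum K (d 0%N) B G); first last.
- by move=> t Bt; rewrite /G Iter_neg //; lia.
- by apply: HK.
apply: eq_bigr => x _.
case: (leqP (d 0%N) x) => dx; last first.
  rewrite mul0r big1 // => g _.
  by rewrite /bc_term big_ord_recl fcons0 /= leqNgt dx !mul0r.
rewrite mul1r /G -(IH (fun i => d i.+1)); last first.
  by move=> i Hi; have := HK i.+1 Hi; lia.
apply: eq_bigr => g _.
rewrite /bc_term !big_ord_recl /= fcons0 dx mul1r.
have E1 : \prod_(i < n) ((d (bump 0 i) <= fcons x g (lift ord0 i))%N)%:R =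
   \prod_(j < n) ((d j.+1 <= g j)%N)%:R :> CC by apply: eq_bigr => i _; rewrite fconsS.
have E2 : \sum_(i < n) ((fcons x g (lift ord0 i) : nat)%:Z - (d (bump 0 i))%:Z) =
   \sum_(j < n) ((g j : nat)%:Z - (d j.+1)%:Z) by apply: eq_bigr => i _; rewrite fconsS.
have E3 : \sum_(i < n) w (bump 0 i) * ((fcons x g (lift ord0 i) : nat)%:Z - (d (bump 0 i))%:Z) =
   \sum_(j < n) w j.+1 * ((g j : nat)%:Z - (d j.+1)%:Z) by apply: eq_bigr => i _; rewrite fconsS.
rewrite E1 E2 E3.
have Ex : ((x - d 0%N)%N)%:Z = (x : nat)%:Z - (d 0%N)%:Z by lia.
rewrite Ex -!mulrA; congr (_ * _).
set S := \sum_(j < n) _.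
have -> : ((x : nat)%:Z - (d 0%N)%:Z + S <= B) = (S <= B - ((x : nat)%:Z - (d 0%N)%:Z)) by lia.
congr (_ * _); congr Phi; first by rewrite addrA.
by rewrite opprD addrA.
Qed.

Definition lev (l : nat) (ii : nat -> int) (v : int) : nat :=
  (\sum_(1 <= n < l.+1) nat_of_bool (ii n <= v)%R)%N.

Definition FFp (l : nat) (FF : nat -> 'M[CC]_l) (L : nat) : 'M[CC]_l :=
  (\sum_(1 <= n < L.+1) FF n)%MS.

Definition mono (l : nat) (ii : nat -> int) :=
  forall n, (1 <= n < l)%N -> ii n <= ii n.+1.

Lemma mono_le l ii : mono l ii -> forall n m, (1 <= n)%N -> (n <= m)%N -> (m <= l)%N -> ii n <= ii m.
Proof.
move=> Hm n m n1; elim: m => [|m IH]; first by rewrite leqn0 => /eqP ->; lia.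
rewrite leq_eqVlt => /orP[/eqP -> //|nm] ml.
apply: le_trans (IH nm (ltnW ml)) _; apply: Hm.
by rewrite ml andbT; lia.
Qed.

Lemma lev_le l ii v : (lev l ii v <= l)%N.
Proof.
rewrite /lev; apply: (@leq_trans (\sum_(1 <= n < l.+1) 1)%N).
  by apply: leq_sum => i _; apply: leq_b1.
by rewrite sum_nat_const_nat muln1 subn1.
Qed.

Lemma levP l ii v k : mono l ii -> (1 <= k <= l)%N -> (k <= lev l ii v)%N = (ii k <= v).
Proof.
move=> Hm /andP[k1 kl]; rewrite /lev.
case: (lerP (ii k) v) => Hk.
  rewrite (big_cat_nat (n := k.+1)); [|lia|lia].
  apply: leq_trans (leq_addr _ _).
  rewrite (eq_big_nat _ _ (F2 := fun _ => 1%N)); last first.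
    move=> i /andP[i1 ik]; apply/eqP; rewrite eqb1.
    by apply: le_trans Hk; apply: (mono_le Hm) => //; lia.
  by rewrite sum_nat_const_nat muln1 subn1.
apply/negbTE; rewrite -ltnNge.
rewrite (big_cat_nat (n := k)); [|lia|lia].
have E : (\sum_(k <= i < l.+1) nat_of_bool (ii i <= v)%R = 0)%N.
  rewrite big_nat_cond big1 // => i /andP[/andP[ki il] _].
  apply/eqP; rewrite eqb0 -ltNge.
  by apply: lt_le_trans Hk _; apply: (mono_le Hm) => //; lia.
rewrite E /= addn0.
apply: (@leq_ltn_trans (\sum_(1 <= n < k) 1)%N).
  by apply: leq_sum => i _; apply: leq_b1.
by rewrite sum_nat_const_nat muln1; lia.
Qed.

Lemma filt_lev l ii (FF : nat -> 'M[CC]_l) v : mono l ii ->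
  filt ii FF v = FFp FF (lev l ii v).
Proof.
move=> Hm; rewrite /filt /FFp.
set L := lev l ii v.
have Ll : (L <= l)%N by apply: lev_le.
rewrite big_mkcond /=.
rewrite (eq_big_nat _ _ (F2 := fun n => if (n <= L)%N then FF n else 0)); last first.
  by move=> i Hi; rewrite -(@levP l ii v i Hm) //; lia.
rewrite (big_cat_nat (n := L.+1)); [|lia|lia].
have E : (\sum_(L.+1 <= i < l.+1) (if (i <= L)%N then FF i else 0))%MS = 0.
  by rewrite big_nat_cond big1 // => i /andP[/andP[Li _] _]; rewrite leqNgt Li.
rewrite E Monoid.mulm1.
apply: eq_big_nat => i /andP[_ iL].
by rewrite -ltnS iL.
Qed.

Lemma FFp0 l (FF : nat -> 'M[CC]_l) : FFp FF 0 = 0.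
Proof. by rewrite /FFp big_geq. Qed.

Lemma rank_cap4_0 (l s r : nat) (X : 'M[CC]_l) (Y : 'I_s -> 'M[CC]_l) (Z : 'M[CC]_l)
  (W : 'I_r -> 'M[CC]_l) :
  (X = 0 \/ (exists i, Y i = 0) \/ Z = 0 \/ (exists j, W j = 0)) ->
  \rank (X :&: (\bigcap_(i < s) Y i) :&: Z :&: (\bigcap_(j < r) W j))%MS = 0%N.
Proof.
move=> H; apply/eqP; rewrite mxrank_eq0 -submx0.
case: H => [->|[[i Yi]|[->|[j Wj]]]].
- by do 3 apply: submx_trans (capmxSl _ _) _.
- do 2 apply: submx_trans (capmxSl _ _) _; apply: submx_trans (capmxSr _ _) _.
  by apply: (bigcapmx_inf i) => //; rewrite Yi.
- by apply: submx_trans (capmxSl _ _) _; apply: capmxSr.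
- apply: submx_trans (capmxSr _ _) _.
  by apply: (bigcapmx_inf j) => //; rewrite Wj.
Qed.

Definition vR (s r : nat) (a : 'I_r -> nat) (p : int) (m : charM s r) (t : 'I_s.+1) : int :=
  if unlift ord0 t is Some i then m.1 i else pair_rho0 a m + p.
Definition wE (s r : nat) (q : int) (m : charM s r) (u : 'I_r.+1) : int :=
  if unlift ord0 u is Some j then m.2 j else pair_eta0 m + q.

Definition Dmat (s r l : nat) (FR : 'I_s.+1 -> nat -> 'M[CC]_l) (GE : 'I_r.+1 -> nat -> 'M[CC]_l)
  (lam : {ffun 'I_s.+1 -> 'I_l.+1}) (mu : {ffun 'I_r.+1 -> 'I_l.+1}) : 'M[CC]_l :=
  (FFp (FR ord0) (lam ord0) :&: (\bigcap_(i < s) FFp (FR (lift ord0 i)) (lam (lift ord0 i)))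
   :&: FFp (GE ord0) (mu ord0) :&: (\bigcap_(j < r) FFp (GE (lift ord0 j)) (mu (lift ord0 j))))%MS.

Definition lam0 (s r l : nat) (a : 'I_r -> nat) (iR : 'I_s.+1 -> nat -> int) p m
  : {ffun 'I_s.+1 -> 'I_l.+1} := [ffun t => inord (lev l (iR t) (vR a p m t))].
Definition mu0 (s r l : nat) (jE : 'I_r.+1 -> nat -> int) q (m : charM s r)
  : {ffun 'I_r.+1 -> 'I_l.+1} := [ffun u => inord (lev l (jE u) (wE q m u))].

Lemma H0_Dmat (s r l : nat) (a : 'I_r -> nat) iR (FR : 'I_s.+1 -> nat -> 'M[CC]_l) jE GE p q m :
  (forall t, mono l (iR t)) -> (forall u, mono l (jE u)) ->
  H0_weight a iR FR jE GE p q m = Dmat FR GE (@lam0 s r l a iR p m) (@mu0 s r l jE q m).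
Proof.
move=> HR HE; rewrite /H0_weight /Dmat /lam0 /mu0; congr (_ :&: _ :&: _ :&: _)%MS.
- by rewrite ffunE inordK ?ltnS ?lev_le // /vR unlift_none; apply: filt_lev.
- apply: eq_bigr => i _.
  by rewrite ffunE inordK ?ltnS ?lev_le // /vR liftK; apply: filt_lev.
- by rewrite ffunE inordK ?ltnS ?lev_le // /wE unlift_none; apply: filt_lev.
- apply: eq_bigr => j _.
  by rewrite ffunE inordK ?ltnS ?lev_le // /wE liftK; apply: filt_lev.
Qed.

Lemma prod_ind_ne (I : finType) (n : nat) (L : I -> nat) (lam lam' : {ffun I -> 'I_n.+1}) :
  (forall t, (L t <= n)%N) -> lam' = [ffun t => inord (L t)] -> lam != lam' ->
  \prod_(t : I) ((L t == lam t)%N)%:R = 0 :> CC.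
Proof.
move=> Ln -> ne.
have [t Ht] : exists t, lam t != inord (L t).
  apply/existsP; apply: contraR ne => /existsPn H; apply/eqP/ffunP => t.
  by rewrite ffunE; move: (H t); rewrite negbK => /eqP.
rewrite (bigD1 t) //= (_ : (L t == lam t) = false) ?mul0r //.
apply: contraNF Ht => /eqP ->; apply/eqP/val_inj => /=.
by rewrite inordK // ltnS -(eqP (_ : L t == lam t)) ?Ln.
Qed.

Lemma prod_ind_eq (I : finType) (n : nat) (L : I -> nat) :
  (forall t, (L t <= n)%N) ->
  \prod_(t : I) ((L t == [ffun t => (inord (L t) : 'I_n.+1)] t)%N)%:R = 1 :> CC.
Proof.
by move=> Ln; apply: big1 => t _; rewrite ffunE inordK ?ltnS ?Ln // eqxx.
Qed.

Lemma rank_expand (s r l : nat) (a : 'I_r -> nat) iR (FR : 'I_s.+1 -> nat -> 'M[CC]_l) jE GE p q m :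
  (forall t, mono l (iR t)) -> (forall u, mono l (jE u)) ->
  (\rank (H0_weight a iR FR jE GE p q m))%:R =
  \sum_(lam : {ffun 'I_s.+1 -> 'I_l.+1}) \sum_(mu : {ffun 'I_r.+1 -> 'I_l.+1})
    (\rank (Dmat FR GE lam mu))%:R *
    ((\prod_(t : 'I_s.+1) ((lev l (iR t) (vR a p m t) == lam t)%N)%:R) *
     (\prod_(u : 'I_r.+1) ((lev l (jE u) (wE q m u) == mu u)%N)%:R)) :> CC.
Proof.
move=> HR HE; rewrite H0_Dmat //.
set L0 := @lam0 s r l a iR p m; set M0 := @mu0 s r l jE q m.
set F := fun (lam : {ffun 'I_s.+1 -> 'I_l.+1}) (mu : {ffun 'I_r.+1 -> 'I_l.+1}) =>
    (\rank (Dmat FR GE lam mu))%:R *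
    ((\prod_(t : 'I_s.+1) ((lev l (iR t) (vR a p m t) == lam t)%N)%:R) *
     (\prod_(u : 'I_r.+1) ((lev l (jE u) (wE q m u) == mu u)%N)%:R)) : CC.
have Z1 : \sum_(lam | lam != L0) \sum_mu F lam mu = 0.
  apply: big1 => lam nlam; apply: big1 => mu _.
  by rewrite /F (prod_ind_ne (lam' := L0)) ?mul0r ?mulr0 // => t; apply: lev_le.
have Z2 : \sum_(mu | mu != M0) F L0 mu = 0.
  apply: big1 => mu nmu.
  by rewrite /F [X in _ * (_ * X)](prod_ind_ne (lam' := M0)) ?mulr0 // => t; apply: lev_le.
rewrite (bigD1 L0) //= Z1 addr0 (bigD1 M0) //= Z2 addr0 /F.
rewrite /L0 /M0 /lam0 /mu0 !prod_ind_eq ?mulr1 // => t; apply: lev_le.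
Qed.

Definition chi (l : nat) (ii : nat -> int) (k : nat) (v : int) : CC :=
  ((k <= l)%N && (ii k <= v)%R)%:R.

Lemma ind_lev l ii v n : mono l ii -> (1 <= n <= l)%N ->
  ((lev l ii v == n)%N)%:R = chi l ii n v - chi l ii n.+1 v.
Proof.
move=> Hm Hn; rewrite /chi.
have E1 : ((n <= l)%N && (ii n <= v)) = (n <= lev l ii v)%N.
  by rewrite -(levP v Hm) //; move/andP: Hn => [_ ->].
have E2 : ((n.+1 <= l)%N && (ii n.+1 <= v)) = (n < lev l ii v)%N.
  case: (leqP n.+1 l) => h /=; first by rewrite -(levP v Hm) //; lia.
  by have := lev_le l ii v; lia.
rewrite E1 E2; set L := lev l ii v.
have [->|ne] := eqVneq L n; first by rewrite leqnn ltnn subr0.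
by rewrite leq_eqVlt eq_sym (negbTE ne) /= subrr.
Qed.

Definition ext (n : nat) (T : Type) (x0 : T) (f : 'I_n -> T) (k : nat) : T :=
  if insub k is Some o then f o else x0.

Lemma ext_val n T x0 (f : 'I_n -> T) (o : 'I_n) : ext x0 f o = f o.
Proof. by rewrite /ext valK. Qed.

Definition emb (s r K : nat) (iR : 'I_s.+1 -> nat -> int) (jE : 'I_r.+1 -> nat -> int)
  (z : {ffun 'I_s -> 'I_K} * {ffun 'I_r -> 'I_K}) : charM s r :=
  ([ffun i => iR (lift ord0 i) 1%N + (z.1 i : nat)%:Z],
   [ffun j => jE (lift ord0 j) 1%N + (z.2 j : nat)%:Z]).

Lemma sum_le_mul (n : nat) (a f : 'I_n -> int) (F : int) :
  (forall j, 0 <= a j) -> (forall j, 0 <= f j <= F) ->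
  \sum_j a j * f j <= (\sum_j a j) * F.
Proof.
move=> a0 f0; rewrite mulr_suml; apply: ler_sum => j _.
by apply: ler_wpM2l => //; case/andP: (f0 j).
Qed.

Lemma le_sum1 (I : finType) (f : I -> int) (i : I) :
  (forall j, 0 <= f j) -> f i <= \sum_j f j.
Proof.
move=> f0; rewrite (bigD1 i) //= lerDl.
by apply: sumr_ge0 => j _.
Qed.

Lemma prod_bool (I : finType) (b : I -> bool) :
  \prod_(j : I) (b j)%:R = ([forall j, b j])%:R :> CC.
Proof.
case: (boolP [forall j, b j]) => [/forallP H|/forallPn [j Hj]].
  by apply: big1 => j _; rewrite H.
by rewrite (bigD1 j) //= (negbTE Hj) mul0r.
Qed.

Lemma prod_bool0 (I : finType) (b : I -> bool) :
  ~~ [forall j, b j] -> \prod_(j : I) (b j)%:R = 0 :> CC.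
Proof. by move=> H; rewrite prod_bool (negbTE H). Qed.
Lemma prod_bool1 (I : finType) (b : I -> bool) :
  [forall j, b j] -> \prod_(j : I) (b j)%:R = 1 :> CC.
Proof. by move=> H; rewrite prod_bool H. Qed.

Lemma beqI (b1 b2 : bool) : (b1 -> b2) -> (b2 -> b1) -> b1 = b2.
Proof. by case: b1; case: b2 => // H1 H2; [rewrite H1 | rewrite H2]. Qed.

Lemma count_eq (s r K : nat) (a : 'I_r -> nat) (iR : 'I_s.+1 -> nat -> int)
  (jE : 'I_r.+1 -> nat -> int) (p q : int) (th : 'I_s.+1 -> int) (th' : 'I_r.+1 -> int) :
  let d (i : 'I_s) := tnat (th (lift ord0 i) - iR (lift ord0 i) 1%N) in
  let d' (j : 'I_r) := tnat (th' (lift ord0 j) - jE (lift ord0 j) 1%N) in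
  let A := p - th ord0 - \sum_(i < s) th (lift ord0 i)
           + \sum_(j < r) (a j)%:Z * th' (lift ord0 j) in
  let B := q - th' ord0 - \sum_(j < r) th' (lift ord0 j) in
  (forall i : 'I_s, iR (lift ord0 i) 1%N <= th (lift ord0 i)) -> (forall j : 'I_r, jE (lift ord0 j) 1%N <= th' (lift ord0 j)) ->
  (forall j, (d' j)%:Z + B < K%:Z) ->
  (forall i, (d i)%:Z + (A + (\sum_(j < r) (a j)%:Z) * B) < K%:Z) ->
  \sum_(z : {ffun 'I_s -> 'I_K} * {ffun 'I_r -> 'I_K})
    (\prod_(t : 'I_s.+1) ((th t <= vR a p (emb iR jE z) t)%R)%:R) *
    (\prod_(u : 'I_r.+1) ((th' u <= wE q (emb iR jE z) u)%R)%:R)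
  = Iter r (ext 0 (fun j => (a j)%:Z))
      (fun A' _ => Iter s (fun _ => 0) (fun _ _ => 1) 0 A') A B.
Proof.
move=> d d' A B Hlo Hlo' HK1 HK2.
have Ed i : (d i)%:Z = th (lift ord0 i) - iR (lift ord0 i) 1%N by rewrite tnatZ // subr_ge0.
have Ed' j : (d' j)%:Z = th' (lift ord0 j) - jE (lift ord0 j) 1%N by rewrite tnatZ // subr_ge0.
rewrite (_ : \sum_(z : _ * _) _ = \sum_(g : {ffun 'I_s -> 'I_K}) \sum_(h : {ffun 'I_r -> 'I_K})
   (\prod_(t : 'I_s.+1) ((th t <= vR a p (emb iR jE (g, h)) t)%R)%:R) *
   (\prod_(u : 'I_r.+1) ((th' u <= wE q (emb iR jE (g, h)) u)%R)%:R)); last first.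
  by rewrite pair_bigA; apply: eq_bigr => -[g h].
rewrite exchange_big /=.
rewrite -(@box_count r K (ext 0%N d') (ext 0 (fun j => (a j)%:Z)) _ A B); last first.
  by move=> i Hi; have := HK1 (Ordinal Hi); rewrite -(ext_val 0%N d').
apply: eq_bigr => h _.
set SH := \sum_(j < r) ((h j : nat)%:Z).
set SD' := \sum_(j < r) ((d' j)%:Z).
set SL' := \sum_(j < r) jE (lift ord0 j) 1%N.
have ST' : \sum_(j < r) th' (lift ord0 j) = SL' + SD'.
  by rewrite -big_split /=; apply: eq_bigr => j _; rewrite Ed'; lia.
have SHD : \sum_(j < r) ((h j : nat)%:Z - (ext 0%N d' j)%:Z) = SH - SD'.
  by rewrite -sumrB; apply: eq_bigr => j _; rewrite ext_val.
have Eout : forall g : {ffun 'I_s -> 'I_K},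
    \prod_(u : 'I_r.+1) ((th' u <= wE q (emb iR jE (g, h)) u)%R)%:R =
    (\prod_(j < r) ((ext 0%N d' j <= h j)%N)%:R) *
    ((\sum_(j < r) ((h j : nat)%:Z - (ext 0%N d' j)%:Z) <= B)%R)%:R :> CC.
  move=> g; rewrite big_ord_recl mulrC /wE unlift_none; congr (_ * _%:R).
    apply: eq_bigr => j _; rewrite liftK ffunE ext_val /=; congr (_%:R).
    by apply: congr1; apply: beqI => H; have := Ed' j; lia.
  rewrite SHD /pair_eta0 /=.
  have -> : \sum_(j < r) [ffun j0 => jE (lift ord0 j0) 1%N + (h j0 : nat)%:Z] j = SL' + SH.
    by rewrite -big_split /=; apply: eq_bigr => j _; rewrite ffunE.
  by rewrite /B ST'; apply: congr1; apply: beqI => H; lia.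
under eq_bigr do rewrite Eout.
rewrite -mulr_suml /bc_term.
case: (boolP [forall j : 'I_r, (ext 0%N d' j <= h j)%N]) => Hf; last by rewrite (prod_bool0 Hf) !mul0r mulr0.
case: (boolP (\sum_(j < r) ((h j : nat)%:Z - (ext 0%N d' j)%:Z) <= B)) => HB;
  last by rewrite /= mulr0n !mulr0 !mul0r.
rewrite (prod_bool1 Hf) /= mulr1n !mul1r mulr1.
set Y := \sum_(j < r) ext 0 (fun j => (a j)%:Z) j * ((h j : nat)%:Z - (ext 0%N d' j)%:Z).
have HY : Y <= (\sum_(j < r) (a j)%:Z) * B.
  rewrite /Y (eq_bigr (fun j => (a j)%:Z * ((h j : nat)%:Z - (d' j)%:Z))); last first.
    by move=> j _; rewrite !ext_val.
  apply: sum_le_mul => j; first by [].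
  have hj : (d' j <= h j)%N by move/forallP: Hf => /(_ j); rewrite ext_val.
  apply/andP; split; first by rewrite subr_ge0 lez_nat.
  apply: le_trans HB; rewrite (eq_bigr (fun j => (h j : nat)%:Z - (d' j)%:Z)); last first.
    by move=> k _; rewrite ext_val.
  apply: (@le_sum1 _ (fun k => (h k : nat)%:Z - (d' k)%:Z) j) => k.
  by move/forallP: Hf => /(_ k); rewrite ext_val subr_ge0 lez_nat.
have Ein : forall g : {ffun 'I_s -> 'I_K},
    \prod_(t : 'I_s.+1) ((th t <= vR a p (emb iR jE (g, h)) t)%R)%:R =
    bc_term (ext 0%N d) (fun _ => 0) (fun _ _ => 1) 0 (A + Y) g.
  move=> g.
  rewrite /bc_term mulr1 big_ord_recl /vR unlift_none.
  rewrite mulrC; congr (_ * _%:R).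
    apply: eq_bigr => i _; rewrite liftK ffunE ext_val /=; congr (_%:R).
    by apply: congr1; apply: beqI => H; have := Ed i; lia.
  set SG := \sum_(i < s) ((g i : nat)%:Z).
  set SD := \sum_(i < s) ((d i)%:Z).
  set SL := \sum_(i < s) iR (lift ord0 i) 1%N.
  have ST : \sum_(i < s) th (lift ord0 i) = SL + SD.
    by rewrite -big_split /=; apply: eq_bigr => i _; rewrite Ed; lia.
  have SGD : \sum_(i < s) ((g i : nat)%:Z - (ext 0%N d i)%:Z) = SG - SD.
    by rewrite -sumrB; apply: eq_bigr => i _; rewrite ext_val.
  rewrite SGD /pair_rho0 /=.
  have -> : \sum_(i < s) [ffun i0 => iR (lift ord0 i0) 1%N + (g i0 : nat)%:Z] i = SL + SG.
    by rewrite -big_split /=; apply: eq_bigr => i _; rewrite ffunE.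
  have -> : \sum_(j < r) (a j)%:Z * [ffun j0 => jE (lift ord0 j0) 1%N + (h j0 : nat)%:Z] j =
            \sum_(j < r) (a j)%:Z * th' (lift ord0 j) + Y.
    rewrite /Y -big_split /=; apply: eq_bigr => j _; rewrite ffunE !ext_val Ed' /=.
    by rewrite -mulrDr; congr (_ * _); lia.
  by rewrite /A ST; apply: congr1; apply: beqI => H; lia.
rewrite -(@box_count s K (ext 0%N d) (fun _ => 0) (fun _ _ => 1) 0 (A + Y)); last first.
  move=> i Hi; have := HK2 (Ordinal Hi); rewrite -(ext_val 0%N d) /= => H; apply: le_lt_trans H; rewrite !lerD2l; exact: HY.
by under eq_bigr do rewrite Ein.
Qed.

Lemma emb_inj (s r K : nat) (iR : 'I_s.+1 -> nat -> int) (jE : 'I_r.+1 -> nat -> int) :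
  injective (@emb s r K iR jE).
Proof.
move=> [g h] [g' h'] /= [/ffunP E1 /ffunP E2]; congr (_, _); apply/ffunP => i.
  by have := E1 i; rewrite !ffunE => /addrI [] /val_inj.
by have := E2 i; rewrite !ffunE => /addrI [] /val_inj.
Qed.

Lemma hGamma_box (s r l K : nat) (a : 'I_r -> nat) iR (FR : 'I_s.+1 -> nat -> 'M[CC]_l) jE GE p q :
  (forall m : charM s r, \rank (H0_weight a iR FR jE GE p q m) != 0%N ->
     exists z : {ffun 'I_s -> 'I_K} * {ffun 'I_r -> 'I_K}, emb iR jE z = m) ->
  (hGamma a iR FR jE GE p q)%:R =
  \sum_(z : {ffun 'I_s -> 'I_K} * {ffun 'I_r -> 'I_K})
     (\rank (H0_weight a iR FR jE GE p q (emb iR jE z)))%:R :> CC.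
Proof.
move=> Hsupp.
set rs := map (@emb s r K iR jE) (enum {: {ffun 'I_s -> 'I_K} * {ffun 'I_r -> 'I_K}}).
have urs : uniq rs by rewrite map_inj_uniq ?enum_uniq //; apply: emb_inj.
rewrite /hGamma.
rewrite -(fsbig_widen [set` rs] [set: charM s r]) //; last first.
  move=> m [_ /= nm]; apply/eqP; apply/negPn/negP => Hm; apply: nm.
  have [z <-] := Hsupp m Hm.
  by rewrite /rs /=; apply: map_f; rewrite mem_enum.
rewrite -fsbig_seq // big_map natr_sum big_enum /=.
by apply: eq_bigl => z; rewrite inE.
Qed.

Lemma normN_le (x : int) : - x <= `|x|.
Proof. by rewrite -normrN ler_norm. Qed.

Lemma sumN_le_norm (n : nat) (f : 'I_n -> int) : - \sum_i f i <= \sum_i `|f i|.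
Proof. by rewrite -sumrN; apply: ler_sum => i _; apply: normN_le. Qed.

Lemma sum_le_norm (n : nat) (f : 'I_n -> int) : \sum_i f i <= \sum_i `|f i|.
Proof. by apply: ler_sum => i _; apply: ler_norm. Qed.

Lemma support_lev (s r l : nat) (a : 'I_r -> nat) iR (FR : 'I_s.+1 -> nat -> 'M[CC]_l) jE GE p q m :
  (forall t, mono l (iR t)) -> (forall u, mono l (jE u)) -> (1 <= l)%N ->
  \rank (H0_weight a iR FR jE GE p q m) != 0%N ->
  (forall t, iR t 1%N <= vR a p m t) /\ (forall u, jE u 1%N <= wE q m u).
Proof.
move=> HR HE l1; rewrite H0_Dmat // => Hr; split.
  move=> t; rewrite -(levP _ (HR t)) ?l1 // lt0n; apply: contraNneq Hr => H0.
  apply/eqP; apply: rank_cap4_0; move: H0; case: (unliftP ord0 t) => [i ->|->] H0.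
    by right; left; exists i; rewrite /lam0 ffunE H0 inordK // FFp0.
  by left; rewrite /lam0 ffunE H0 inordK // FFp0.
move=> u; rewrite -(levP _ (HE u)) ?l1 // lt0n; apply: contraNneq Hr => H0.
apply/eqP; apply: rank_cap4_0; move: H0; case: (unliftP ord0 u) => [j ->|->] H0.
  by right; right; right; exists j; rewrite /mu0 ffunE H0 inordK // FFp0.
by right; right; left; rewrite /mu0 ffunE H0 inordK // FFp0.
Qed.

Lemma bound_support (s r : nat) (a : 'I_r -> nat) (lo : 'I_s -> int) (lo' : 'I_r -> int)
  (c0 c0' p q : int) (x : 'I_s -> int) (y : 'I_r -> int) (TR TE : int) :
  (forall i, lo i <= x i) -> (forall j, lo' j <= y j) ->
  c0' <= - \sum_j y j + q ->
  c0 <= - \sum_i x i + \sum_j (a j)%:Z * y j + p ->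
  `|c0| + \sum_i `|lo i| <= TR -> `|c0'| + \sum_j `|lo' j| <= TE ->
  (forall j, y j - lo' j <= `|p| + `|q| + TR + TE) /\
  (forall i, x i - lo i <= (`|p| + `|q| + TR + TE) + 2 * (\sum_j (a j)%:Z) * (`|p| + `|q| + TR + TE)).
Proof.
move=> Hx Hy H3 H4 HTR HTE.
set U := `|p| + `|q| + TR + TE.
set al := \sum_j (a j)%:Z.
have al0 : 0 <= al by apply: sumr_ge0.
have Yj : forall j, 0 <= y j - lo' j by move=> j; rewrite subr_ge0.
have SY : \sum_j (y j - lo' j) = \sum_j y j - \sum_j lo' j by rewrite sumrB.
have Nlo' := sumN_le_norm lo'.
have Nlo := sumN_le_norm lo.
have Nc0 := normN_le c0.
have Nc0' := normN_le c0'.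
have Nq := ler_norm q.
have Np := ler_norm p.
have TRp : 0 <= TR by apply: le_trans HTR; apply: addr_ge0 => //; apply: sumr_ge0.
have TEp : 0 <= TE by apply: le_trans HTE; apply: addr_ge0 => //; apply: sumr_ge0.
have pp : 0 <= `|p| by [].
have qp : 0 <= `|q| by [].
have SYb : \sum_j (y j - lo' j) <= `|q| + TE by rewrite SY; lia.
have Yb : forall j, y j - lo' j <= `|q| + TE.
  by move=> j; apply: le_trans SYb; apply: (@le_sum1 _ (fun k => y k - lo' k)).
split; first by move=> j; have := Yb j; lia.
move=> i.
have Xi0 : forall i, 0 <= x i - lo i by move=> k; rewrite subr_ge0.
have Xi : x i - lo i <= \sum_k (x k - lo k) by apply: (@le_sum1 _ (fun k => x k - lo k)).
have SX : \sum_k (x k - lo k) = \sum_k x k - \sum_k lo k by rewrite sumrB.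
have Say : \sum_j (a j)%:Z * y j = \sum_j (a j)%:Z * lo' j + \sum_j (a j)%:Z * (y j - lo' j).
  by rewrite -big_split /=; apply: eq_bigr => j _; rewrite -mulrDr addrC subrK.
have Sa1 : \sum_j (a j)%:Z * lo' j <= al * TE.
  apply: (@le_trans _ _ (\sum_j (a j)%:Z * `|lo' j|)).
    by apply: ler_sum => j _; apply: ler_wpM2l => //; apply: ler_norm.
  apply: sum_le_mul => // j; rewrite normr_ge0 /=.
  have H1 : `|lo' j| <= \sum_k `|lo' k| by apply: (@le_sum1 _ (fun k => `|lo' k|) j) => k.
  have := normr_ge0 c0'; lia.
have Sa2 : \sum_j (a j)%:Z * (y j - lo' j) <= al * (`|q| + TE).
  by apply: sum_le_mul => // j; rewrite Yj Yb.
have E1 : al * TE <= al * U by apply: ler_wpM2l => //; rewrite /U; lia.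
have E2 : al * (`|q| + TE) <= al * U by apply: ler_wpM2l => //; rewrite /U; lia.
have Slo : \sum_k lo k >= - \sum_k `|lo k| by have := Nlo; lia.
lia.
Qed.

Lemma bound_count (s r : nat) (a : 'I_r -> nat) (lo : 'I_s -> int) (lo' : 'I_r -> int)
  (th : 'I_s.+1 -> int) (th' : 'I_r.+1 -> int) (p q TR TE : int) :
  (forall i, lo i <= th (lift ord0 i)) -> (forall j, lo' j <= th' (lift ord0 j)) ->
  \sum_t `|th t| <= TR -> \sum_i `|lo i| <= TR ->
  \sum_u `|th' u| <= TE -> \sum_j `|lo' j| <= TE ->
  let U := `|p| + `|q| + TR + TE in
  let al := \sum_j (a j)%:Z in
  let A := p - th ord0 - \sum_(i < s) th (lift ord0 i)
           + \sum_(j < r) (a j)%:Z * th' (lift ord0 j) in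
  let B := q - th' ord0 - \sum_(j < r) th' (lift ord0 j) in
  (forall j, (tnat (th' (lift ord0 j) - lo' j))%:Z + B < 4 * U + 4 * al * U + 1) /\
  (forall i, (tnat (th (lift ord0 i) - lo i))%:Z + (A + al * B) < 4 * U + 4 * al * U + 1).
Proof.
move=> Hlo Hlo' HT HL HT' HL' U al A B.
have al0 : 0 <= al by apply: sumr_ge0.
have TRp : 0 <= TR by apply: le_trans HL; apply: sumr_ge0.
have TEp : 0 <= TE by apply: le_trans HL'; apply: sumr_ge0.
have pp : 0 <= `|p| by [].
have qp : 0 <= `|q| by [].
have Np := ler_norm p.
have Nq := ler_norm q.
have sR : - th ord0 - \sum_(i < s) th (lift ord0 i) <= TR.
  have := sumN_le_norm th; rewrite big_ord_recl /= opprD => H; exact: le_trans H HT.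
have sE : - th' ord0 - \sum_(j < r) th' (lift ord0 j) <= TE.
  have := sumN_le_norm th'; rewrite big_ord_recl /= opprD => H; exact: le_trans H HT'.
have Bb : B <= `|q| + TE by rewrite /B; lia.
have thb : forall t, `|th t| <= TR.
  move=> t; apply: le_trans HT; exact: (@le_sum1 _ (fun k => `|th k|) t).
have thb' : forall u, `|th' u| <= TE.
  move=> u; apply: le_trans HT'; exact: (@le_sum1 _ (fun k => `|th' k|) u).
have lob : forall i, `|lo i| <= TR.
  move=> i; apply: le_trans HL; exact: (@le_sum1 _ (fun k => `|lo k|) i).
have lob' : forall j, `|lo' j| <= TE.
  move=> j; apply: le_trans HL'; exact: (@le_sum1 _ (fun k => `|lo' k|) j).
have Sa : \sum_(j < r) (a j)%:Z * th' (lift ord0 j) <= al * TE.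
  apply: (@le_trans _ _ (\sum_j (a j)%:Z * `|th' (lift ord0 j)|)).
    by apply: ler_sum => j _; apply: ler_wpM2l => //; apply: ler_norm.
  by apply: sum_le_mul => // j; rewrite normr_ge0 thb'.
have E1 : al * TE <= al * U by apply: ler_wpM2l => //; rewrite /U; lia.
have E2 : al * B <= al * (`|q| + TE) by apply: ler_wpM2l.
have E3 : al * (`|q| + TE) <= al * U by apply: ler_wpM2l => //; rewrite /U; lia.
have E4 : 0 <= al * U by apply: mulr_ge0 => //; rewrite /U; lia.
split.
  move=> j; rewrite tnatZ; last by rewrite subr_ge0.
  have := thb' (lift ord0 j); have := lob' j.
  have := ler_norm (th' (lift ord0 j)); have := normN_le (lo' j).
  rewrite /U; lia.
move=> i; rewrite tnatZ; last by rewrite subr_ge0.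
have := thb (lift ord0 i); have := lob i.
have := ler_norm (th (lift ord0 i)); have := normN_le (lo i).
rewrite /A /U; lia.
Qed.

Definition TRd (n l : nat) (X : 'I_n -> nat -> int) : int := \sum_t \sum_(k < l.+1) `|X t k|.

Definition Kfd (s r l : nat) (a : 'I_r -> nat) (iR : 'I_s.+1 -> nat -> int)
  (jE : 'I_r.+1 -> nat -> int) (p q : int) : nat :=
  let U := `|p| + `|q| + TRd l iR + TRd l jE in
  tnat (4 * U + 4 * (\sum_j (a j)%:Z) * U + 1).

Definition Reg (s r l : nat) (a : 'I_r -> nat) (iR : 'I_s.+1 -> nat -> int)
  (jE : 'I_r.+1 -> nat -> int) (p q : int) : Prop :=
  (p >= \sum_(t < s.+1) iR t l - \sum_(j < r) (a j)%:Z * jE (lift ord0 j) 1%N - 1) /\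
  (q >= \sum_(u < r.+1) jE u l - 1).

Definition Cnt2 (s r l : nat) (a : 'I_r -> nat) (iR : 'I_s.+1 -> nat -> int)
  (jE : 'I_r.+1 -> nat -> int) (c : 'I_s.+1 -> nat) (c' : 'I_r.+1 -> nat) (p q : int) : CC :=
  \sum_(z : {ffun 'I_s -> 'I_(Kfd l a iR jE p q)} * {ffun 'I_r -> 'I_(Kfd l a iR jE p q)})
    (\prod_(t : 'I_s.+1) chi l (iR t) (c t) (vR a p (emb iR jE z) t)) *
    (\prod_(u : 'I_r.+1) chi l (jE u) (c' u) (wE q (emb iR jE z) u)).

Lemma sum_choice_le (n m : nat) (X : 'I_n -> nat -> int) (c : 'I_n -> nat) :
  (forall t, (c t <= m)%N) -> \sum_t `|X t (c t)| <= \sum_t \sum_(k < m.+1) `|X t k|.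
Proof.
move=> Hc; apply: ler_sum => t _.
have ct : (c t < m.+1)%N by rewrite ltnS.
exact: (@le_sum1 _ (fun k : 'I_m.+1 => `|X t k|) (Ordinal ct)).
Qed.

Lemma Rn_pos n A B : (1 <= n)%N -> Rn n A B -> -1 <= A /\ -1 <= B.
Proof. by case: n. Qed.

Lemma Rn_posI n A B : (1 <= n)%N -> -1 <= A -> -1 <= B -> Rn n A B.
Proof. by case: n. Qed.

Lemma Kfd_Z s r l a iR jE p q :
  (@Kfd s r l a iR jE p q)%:Z =
  4 * (`|p| + `|q| + TRd l iR + TRd l jE) +
  4 * (\sum_j (a j)%:Z) * (`|p| + `|q| + TRd l iR + TRd l jE) + 1.
Proof.
rewrite /Kfd /=; apply: tnatZ.
have h1 : 0 <= TRd l iR by apply: sumr_ge0 => t _; apply: sumr_ge0.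
have h2 : 0 <= TRd l jE by apply: sumr_ge0 => t _; apply: sumr_ge0.
have hU : 0 <= `|p| + `|q| + TRd l iR + TRd l jE.
  by have := normr_ge0 p; have := normr_ge0 q; lia.
rewrite -mulrA; apply: addr_ge0 => //; apply: addr_ge0; apply: mulr_ge0 => //.
by apply: mulr_ge0 => //; apply: sumr_ge0.
Qed.

Lemma Cnt2_poly (s r l : nat) (a : 'I_r -> nat) (iR : 'I_s.+1 -> nat -> int)
  (jE : 'I_r.+1 -> nat -> int) (c : 'I_s.+1 -> nat) (c' : 'I_r.+1 -> nat) :
  (1 <= s)%N -> (1 <= r)%N ->
  (forall t, mono l (iR t)) -> (forall u, mono l (jE u)) ->
  (forall t, (1 <= c t <= l.+1)%N) -> (forall u, (1 <= c' u <= l.+1)%N) ->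
  poly2_on (Reg l a iR jE) (Cnt2 l a iR jE c c').
Proof.
move=> s1 r1 HR HE Hc Hc'.
case: (boolP [forall t, (c t <= l)%N]) => [/forallP cl|/forallPn [t0 ct0]]; last first.
  apply: (poly2_ext _ (poly2_const _ 0)) => p q _.
  rewrite /Cnt2; apply: big1 => z _.
  by rewrite (bigD1 t0) //= /chi (negbTE ct0) /= mulr0n !mul0r.
case: (boolP [forall u, (c' u <= l)%N]) => [/forallP cl'|/forallPn [u0 cu0]]; last first.
  apply: (poly2_ext _ (poly2_const _ 0)) => p q _.
  rewrite /Cnt2; apply: big1 => z _.
  by rewrite [X in _ * X](bigD1 u0) //= /chi (negbTE cu0) /= mulr0n !mul0r mulr0.
pose th t := iR t (c t).
pose th' u := jE u (c' u).
have c1 : forall t, (1 <= c t)%N by move=> t; case/andP: (Hc t).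
have c1' : forall u, (1 <= c' u)%N by move=> u; case/andP: (Hc' u).
have l1 : (1 <= l)%N by apply: leq_trans (c1 ord0) (cl ord0).
have Hlo : forall i : 'I_s, iR (lift ord0 i) 1%N <= th (lift ord0 i).
  by move=> i; apply: (mono_le (HR _)) => //.
have Hlo' : forall j : 'I_r, jE (lift ord0 j) 1%N <= th' (lift ord0 j).
  by move=> j; apply: (mono_le (HE _)) => //.
have [P0 HP0] := @Iter_poly _ (poly2_const (Rn 0) 1) s (fun _ => 0) (fun _ => lexx 0).
pose Phi2 := fun (A' : int) (_ : int) => Iter s (fun _ => 0) (fun _ _ => 1) 0 A'.
have HPhi2 : poly2_on (Rn 0) Phi2.
  apply: (poly2_ext (G := fun x y => eval2 P0 (0%:~R) x%:~R)).
    move=> x y [hx _]; rewrite /Phi2 HP0 //; exact: Rn_posI.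
  apply: poly2_comp; [exact: poly2_const | exact: poly2_x].
have w0 : forall i, 0 <= ext 0 (fun j => (a j)%:Z) i.
  by move=> i; rewrite /ext; case: insub.
have [P HP] := Iter_poly HPhi2 r w0.
pose cA := - th ord0 - \sum_(i < s) th (lift ord0 i) + \sum_(j < r) (a j)%:Z * th' (lift ord0 j).
pose cB := - th' ord0 - \sum_(j < r) th' (lift ord0 j).
apply: (poly2_ext (G := fun p q => eval2 P (p%:~R + cA%:~R) (q%:~R + cB%:~R))).
  move=> p q [Hp Hq].
  have -> : Cnt2 l a iR jE c c' p q =
    \sum_(z : {ffun 'I_s -> 'I_(Kfd l a iR jE p q)} * {ffun 'I_r -> 'I_(Kfd l a iR jE p q)})
    (\prod_(t : 'I_s.+1) ((th t <= vR a p (emb iR jE z) t)%R)%:R) *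
    (\prod_(u : 'I_r.+1) ((th' u <= wE q (emb iR jE z) u)%R)%:R).
    apply: eq_bigr => z _; congr (_ * _).
      by apply: eq_bigr => t _; rewrite /chi cl.
    by apply: eq_bigr => u _; rewrite /chi cl'.
  have Hb := @bound_count s r a (fun i => iR (lift ord0 i) 1%N) (fun j => jE (lift ord0 j) 1%N)
    th th' p q (TRd l iR) (TRd l jE) Hlo Hlo'.
  have L1 : \sum_i `|iR (lift ord0 i) 1%N| <= TRd l iR.
    have := @sum_choice_le _ l iR (fun _ => 1%N) (fun _ => l1).
    rewrite big_ord_recl /= => H; apply: le_trans H.
    by rewrite -subr_ge0 addrK normr_ge0.
  have L2 : \sum_j `|jE (lift ord0 j) 1%N| <= TRd l jE.
    have := @sum_choice_le _ l jE (fun _ => 1%N) (fun _ => l1).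
    rewrite big_ord_recl /= => H; apply: le_trans H.
    by rewrite -subr_ge0 addrK normr_ge0.
  have [HK1 HK2] := Hb (@sum_choice_le _ l iR c cl) L1 (@sum_choice_le _ l jE c' cl') L2.
  have K1 : forall j : 'I_r, (tnat (th' (lift ord0 j) - jE (lift ord0 j) 1%N))%:Z +
      (q - th' ord0 - \sum_(j < r) th' (lift ord0 j)) < (Kfd l a iR jE p q)%:Z.
    by move=> j; rewrite Kfd_Z; apply: HK1.
  have K2 : forall i : 'I_s, (tnat (th (lift ord0 i) - iR (lift ord0 i) 1%N))%:Z +
      ((p - th ord0 - \sum_(i < s) th (lift ord0 i) + \sum_(j < r) (a j)%:Z * th' (lift ord0 j)) +
       (\sum_j (a j)%:Z) * (q - th' ord0 - \sum_(j < r) th' (lift ord0 j))) < (Kfd l a iR jE p q)%:Z.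
    by move=> i; rewrite Kfd_Z; apply: HK2.
  rewrite (@count_eq s r (Kfd l a iR jE p q) a iR jE p q th th' Hlo Hlo' K1 K2).
  have F1 : th ord0 + \sum_(i < s) th (lift ord0 i) <= \sum_(t < s.+1) iR t l.
    have : \sum_(t < s.+1) th t <= \sum_(t < s.+1) iR t l.
      by apply: ler_sum => t _; apply: (mono_le (HR t)) => //.
    by rewrite big_ord_recl.
  have F2 : \sum_(j < r) (a j)%:Z * jE (lift ord0 j) 1%N <= \sum_(j < r) (a j)%:Z * th' (lift ord0 j).
    by apply: ler_sum => j _; apply: ler_wpM2l => //.
  have F3 : th' ord0 + \sum_(j < r) th' (lift ord0 j) <= \sum_(u < r.+1) jE u l.
    have : \sum_(u < r.+1) th' u <= \sum_(u < r.+1) jE u l.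
      by apply: ler_sum => u _; apply: (mono_le (HE u)) => //.
    by rewrite big_ord_recl.
  have EA : p - th ord0 - \sum_(i < s) th (lift ord0 i) + \sum_(j < r) (a j)%:Z * th' (lift ord0 j)
            = p + cA by rewrite /cA !addrA.
  have EB : q - th' ord0 - \sum_(j < r) th' (lift ord0 j) = q + cB by rewrite /cB !addrA.
  rewrite EA EB HP ?intrD //.
  by apply: Rn_posI => //; rewrite /cA /cB; lia.
apply: poly2_comp; apply: poly2_add; (exact: poly2_x || exact: poly2_y || exact: poly2_const).
Qed.

Definition Cnt (s r l : nat) (a : 'I_r -> nat) (iR : 'I_s.+1 -> nat -> int)
  (jE : 'I_r.+1 -> nat -> int) (lam : {ffun 'I_s.+1 -> 'I_l.+1}) (mu : {ffun 'I_r.+1 -> 'I_l.+1})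
  (p q : int) : CC :=
  \sum_(z : {ffun 'I_s -> 'I_(Kfd l a iR jE p q)} * {ffun 'I_r -> 'I_(Kfd l a iR jE p q)})
    ((\prod_(t : 'I_s.+1) ((lev l (iR t) (vR a p (emb iR jE z) t) == lam t)%N)%:R) *
     (\prod_(u : 'I_r.+1) ((lev l (jE u) (wE q (emb iR jE z) u) == mu u)%N)%:R)).

Lemma prod_diff (I : finType) (f g : I -> CC) :
  \prod_i (f i - g i) = \sum_(S : {ffun I -> bool})
     (\prod_i (if S i then -1 else 1)) * \prod_i (if S i then g i else f i).
Proof.
rewrite (eq_bigr (fun i => \sum_(b : bool) (if b then - g i else f i))); last first.
  by move=> i _; rewrite big_bool /= addrC.
rewrite bigA_distr_bigA; apply: eq_bigr => S _.
rewrite -big_split /=; apply: eq_bigr => i _.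
by case: (S i); rewrite ?mulN1r ?mul1r.
Qed.

Lemma prod_lev (n l : nat) (X : 'I_n -> nat -> int) (v : 'I_n -> int) (lam : 'I_n -> 'I_l.+1) :
  (forall t, mono l (X t)) -> (forall t, (0 < lam t)%N) ->
  \prod_t ((lev l (X t) (v t) == lam t)%N)%:R =
  \sum_(S : {ffun 'I_n -> bool}) (\prod_t (if S t then -1 else 1)) *
      \prod_t chi l (X t) (lam t + S t)%N (v t) :> CC.
Proof.
move=> HX Hl.
rewrite (eq_bigr (fun t => chi l (X t) (lam t) (v t) - chi l (X t) (lam t).+1 (v t))); last first.
  by move=> t _; apply: ind_lev => //; rewrite Hl -ltnS ltn_ord.
rewrite prod_diff; apply: eq_bigr => S _; congr (_ * _); apply: eq_bigr => t _.
by case: (S t); rewrite ?addn1 ?addn0.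
Qed.

Lemma Cnt_poly (s r l : nat) (a : 'I_r -> nat) (iR : 'I_s.+1 -> nat -> int)
  (jE : 'I_r.+1 -> nat -> int) (lam : {ffun 'I_s.+1 -> 'I_l.+1}) (mu : {ffun 'I_r.+1 -> 'I_l.+1}) :
  (1 <= s)%N -> (1 <= r)%N ->
  (forall t, mono l (iR t)) -> (forall u, mono l (jE u)) ->
  (forall t, (0 < lam t)%N) -> (forall u, (0 < mu u)%N) ->
  poly2_on (Reg l a iR jE) (@Cnt s r l a iR jE lam mu).
Proof.
move=> s1 r1 HR HE Hl Hm.
pose sg (n : nat) (S : {ffun 'I_n -> bool}) : CC := \prod_t (if S t then -1 else 1).
apply: (poly2_ext (G := fun p q => \sum_(S : {ffun 'I_s.+1 -> bool}) \sum_(S' : {ffun 'I_r.+1 -> bool})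
    (sg _ S * sg _ S') * Cnt2 l a iR jE (fun t => (lam t + S t)%N) (fun u => (mu u + S' u)%N) p q)).
  move=> p q _; rewrite /Cnt /Cnt2.
  under eq_bigr => z _ do rewrite (prod_lev _ HR Hl) (prod_lev _ HE Hm) mulr_suml.
  rewrite exchange_big; apply: eq_bigr => S _.
  under eq_bigr => z _ do rewrite mulr_sumr.
  rewrite exchange_big; apply: eq_bigr => S' _.
  rewrite mulr_sumr; apply: eq_bigr => z _.
  by rewrite /sg mulrACA.
apply: poly2_sumI => S; apply: poly2_sumI => S'.
apply: poly2_mul; first exact: poly2_const.
apply: Cnt2_poly => // [t|u].
  by rewrite addn_gt0 Hl /=; have := ltn_ord (lam t); case: (S t); lia.
by rewrite addn_gt0 Hm /=; have := ltn_ord (mu u); case: (S' u); lia.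
Qed.

Lemma arith1 (U al x : int) : 0 <= U -> 0 <= al -> x <= U + 2 * al * U ->
  x < 4 * U + 4 * al * U + 1.
Proof. move=> hU hal hx; have : 0 <= al * U by apply: mulr_ge0. rewrite -!mulrA in hx *; lia. Qed.

Lemma arith2 (U al x : int) : 0 <= U -> 0 <= al -> x <= U ->
  x < 4 * U + 4 * al * U + 1.
Proof. move=> hU hal hx; have : 0 <= al * U by apply: mulr_ge0. rewrite -!mulrA; lia. Qed.

Lemma hGamma_exp (s r l : nat) (a : 'I_r -> nat) iR (FR : 'I_s.+1 -> nat -> 'M[CC]_l) jE GE p q :
  (1 <= l)%N -> (forall t, mono l (iR t)) -> (forall u, mono l (jE u)) ->
  (hGamma a iR FR jE GE p q)%:R =
  \sum_(lam : {ffun 'I_s.+1 -> 'I_l.+1}) \sum_(mu : {ffun 'I_r.+1 -> 'I_l.+1})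
    (\rank (Dmat FR GE lam mu))%:R * @Cnt s r l a iR jE lam mu p q.
Proof.
move=> l1 HR HE.
rewrite (@hGamma_box s r l (Kfd l a iR jE p q)); last first.
  move=> m Hr.
  have [HsR HsE] := support_lev HR HE l1 Hr.
  have HTR : `|iR ord0 1%N| + \sum_i `|iR (lift ord0 i) 1%N| <= TRd l iR.
    have := @sum_choice_le _ l iR (fun _ => 1%N) (fun _ => l1).
    by rewrite big_ord_recl.
  have HTE : `|jE ord0 1%N| + \sum_j `|jE (lift ord0 j) 1%N| <= TRd l jE.
    have := @sum_choice_le _ l jE (fun _ => 1%N) (fun _ => l1).
    by rewrite big_ord_recl.
  have Hx : forall i, iR (lift ord0 i) 1%N <= m.1 i.
    by move=> i; have := HsR (lift ord0 i); rewrite /vR liftK.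
  have Hy : forall j, jE (lift ord0 j) 1%N <= m.2 j.
    by move=> j; have := HsE (lift ord0 j); rewrite /wE liftK.
  have H3 := HsE ord0; rewrite /wE unlift_none /pair_eta0 in H3.
  have H4 := HsR ord0; rewrite /vR unlift_none /pair_rho0 in H4.
  have [Yb Xb] := bound_support Hx Hy H3 H4 HTR HTE.
  have hU : 0 <= `|p| + `|q| + TRd l iR + TRd l jE.
    have h1 : 0 <= TRd l iR by apply: sumr_ge0 => t _; apply: sumr_ge0.
    have h2 : 0 <= TRd l jE by apply: sumr_ge0 => t _; apply: sumr_ge0.
    by have := normr_ge0 p; have := normr_ge0 q; lia.
  have hal : 0 <= \sum_j (a j)%:Z by apply: sumr_ge0.
  have Xlt : forall i, (tnat (m.1 i - iR (lift ord0 i) 1%N) < Kfd l a iR jE p q)%N.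
    move=> i; rewrite -ltz_nat tnatZ ?subr_ge0 // Kfd_Z.
    exact: arith1 hU hal (Xb i).
  have Ylt : forall j, (tnat (m.2 j - jE (lift ord0 j) 1%N) < Kfd l a iR jE p q)%N.
    move=> j; rewrite -ltz_nat tnatZ ?subr_ge0 // Kfd_Z.
    exact: arith2 hU hal (Yb j).
  exists ([ffun i => Ordinal (Xlt i)], [ffun j => Ordinal (Ylt j)]).
  rewrite [RHS]surjective_pairing /emb /=; congr (_, _); apply/ffunP => i; rewrite !ffunE /= tnatZ ?subr_ge0 //.
    by have := Hx i; lia.
  by have := Hy i; lia.
under eq_bigr => z _ do rewrite rank_expand //.
rewrite exchange_big; apply: eq_bigr => lam _.
rewrite exchange_big; apply: eq_bigr => mu _.
by rewrite /Cnt mulr_sumr.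
Qed.

Unset Implicit Arguments.
Set Strict Implicit.

Theorem mainTheorem12 (s r l : nat) (a : 'I_r -> nat)
  (iR : 'I_s.+1 -> nat -> int) (FR : 'I_s.+1 -> nat -> 'M[CC]_l)
  (jE : 'I_r.+1 -> nat -> int) (GE : 'I_r.+1 -> nat -> 'M[CC]_l) :
  (1 <= s)%N -> (1 <= r)%N -> (1 <= l)%N ->
  (forall j k : 'I_r, (j <= k)%N -> (a j <= a k)%N) ->
  (forall t, filt_data (iR t) (FR t)) ->
  (forall u, filt_data (jE u) (GE u)) ->
  exists P : {poly {poly CC}},
    forall p q : int,
      p >= \sum_(t < s.+1) iR t l
           - \sum_(j < r) (a j)%:Z * jE (lift ord0 j) 1%N - 1 ->
      q >= \sum_(u < r.+1) jE u l - 1 ->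
      (hGamma a iR FR jE GE p q)%:R = eval2 P p%:~R q%:~R.
Proof.
move=> s1 r1 l1 _ HfR HfE.
have HR : forall t, mono l (iR t) by move=> t; case: (HfR t).
have HE : forall u, mono l (jE u) by move=> u; case: (HfE u).
have Hpoly : poly2_on (Reg l a iR jE) (fun p q => (hGamma a iR FR jE GE p q)%:R).
  apply: (poly2_ext (G := fun p q => \sum_(lam : {ffun 'I_s.+1 -> 'I_l.+1})
      \sum_(mu : {ffun 'I_r.+1 -> 'I_l.+1})
      (\rank (Dmat FR GE lam mu))%:R * @Cnt s r l a iR jE lam mu p q)).
    by move=> p q _; apply: hGamma_exp.
  apply: poly2_sumI => lam; apply: poly2_sumI => mu.
  case: (boolP ([forall t, (0 < lam t)%N] && [forall u, (0 < mu u)%N])).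
    move=> /andP[/forallP Hl /forallP Hm].
    apply: poly2_mul; first exact: poly2_const.
    exact: Cnt_poly.
  move=> H; apply: (poly2_ext _ (poly2_const _ 0)) => p q _.
  suff -> : \rank (Dmat FR GE lam mu) = 0%N by rewrite mul0r.
  apply: rank_cap4_0.
  case/nandP: H => /forallPn [t Ht]; rewrite lt0n negbK in Ht.
    case: (unliftP ord0 t) Ht => [i ->|->] /eqP Ht.
      by right; left; exists i; rewrite Ht FFp0.
    by left; rewrite Ht FFp0.
  case: (unliftP ord0 t) Ht => [j ->|->] /eqP Ht.
    by right; right; right; exists j; rewrite Ht FFp0.
  by right; right; left; rewrite Ht FFp0.
case: Hpoly => P HP; exists P => p q Hp Hq.
by apply: HP; split.
Qed.
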